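(* Let $G$ be a simple graph on vertex set $\{1,\dots,n\}$. The lexicographic algorithm (Algorithm 1) applied to $G$ returns ''failure'' if and only if $G$ is not twin-free; and if $G$ is twin-free, the set $C_n$ it returns is an identifying code of $G$.
   Context: Vertices of $G$ are identified with the integers $1,\dots,n$ and ordered by the usual order. For a vertex $v$, $N(v)=\{v\}\cup\{w : vw\in E(G)\}$ is its closed neighbourhood. A set $C\subseteq V(G)$ is an identifying code if the sets $N(v)\cap C$, $v\in V(G)$, are all nonempty and pairwise distinct. $G$ is twin-free if $N(v)\neq N(w)$ for all distinct vertices $v,w$. The lexicographic algorithm (Algorithm 1): set $C_0=\emptyset$. For $j=1,2,\dots,n$ in turn: (i) if $N(j)\cap C_{j-1}=\emptyset$, set $C_j=C_{j-1}\cup\{\min N(j)\}$; (ii) otherwise, if there exists $k\in\{1,\dots,j-1\}$ with $N(k)\cap C_{j-1}=N(j)\cap C_{j-1}$, let $k$ be the least such index; if $N(j)\neq N(k)$ set $C_j=C_{j-1}\cup\{\min(N(j)\triangle N(k))\}$, while if $N(j)=N(k)$ the algorithm stops immediately and returns ''failure''; (iii) otherwise set $C_j=C_{j-1}$. If the algorithm never fails, it returns $C_n$. Here $\triangle$ denotes symmetric difference. *)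

(* Defs.v *)
From mathcomp Require Import all_boot.
Set Implicit Arguments. Unset Strict Implicit. Unset Printing Implicit Defensive.

(* Vertices 1..n are represented by 'I_n (value k stands for vertex k+1);
   the order on vertices is the usual order on their values. *)

Definition simple_graph (n : nat) (e : rel 'I_n) : Prop :=
  symmetric e /\ irreflexive e.

Definition N (n : nat) (e : rel 'I_n) (v : 'I_n) : {set 'I_n} :=
  v |: [set w | e v w].

Definition twin_free (n : nat) (e : rel 'I_n) : Prop :=
  forall v w : 'I_n, v != w -> N e v != N e w.

Definition identifying_code (n : nat) (e : rel 'I_n) (C : {set 'I_n}) : Prop :=
  (forall v, N e v :&: C != set0) /\
  (forall v w, v != w -> N e v :&: C != N e w :&: C).

(* minimum of a set of vertices (default d if the set is empty; the
   algorithm only takes minima of nonempty sets) *)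
Definition setmin (n : nat) (d : 'I_n) (A : {set 'I_n}) : 'I_n :=
  odflt d [pick x in A | [forall y in A, (x <= y)%N]].

(* One step of Algorithm 1 at vertex j, given C_{j-1}; None = failure *)
Definition lex_step (n : nat) (e : rel 'I_n) (j : 'I_n) (C : {set 'I_n})
  : option {set 'I_n} :=
  if N e j :&: C == set0 then Some (setmin j (N e j) |: C)
  else match [pick k : 'I_n | (k < j)%N && (N e k :&: C == N e j :&: C)
                              & [forall k' : 'I_n,
                                   ((k' < j)%N && (N e k' :&: C == N e j :&: C))
                                   ==> (k <= k')%N]] with
       | Some k =>
           if N e j == N e k then None
           else Some (setmin j ((N e j :\: N e k) :|: (N e k :\: N e j)) |: C)
       | None => Some C
       end.

Definition lex_algorithm (n : nat) (e : rel 'I_n) : option {set 'I_n} :=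
  foldl (fun oC j => if oC is Some C then lex_step e j C else None)
        (Some set0) (enum 'I_n).

(* Main.v *)
Require Import Defs.
From mathcomp Require Import all_boot.

Section S.
Set Implicit Arguments. Unset Strict Implicit.
Variables (n : nat) (e : rel 'I_n).

Lemma setminP (d : 'I_n) (A : {set 'I_n}) : A != set0 -> setmin d A \in A.
Proof.
case/set0Pn=> a Ha; rewrite /setmin.
case: pickP => [x /andP[] //|H]; exfalso.
case: (arg_minnP (fun i : 'I_n => nat_of_ord i) Ha) => m Hm Hmin.
move: (H m); rewrite (_ : (m \in A) = true) //= => /negP; apply; apply/forall_inP => y Hy.
exact: Hmin.
Qed.

Lemma mem_N v : v \in N e v.
Proof. by rewrite /N setU11. Qed.

Definition Inv (C : {set 'I_n}) (m : nat) :=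
  (forall v : 'I_n, (v < m)%N -> N e v :&: C != set0) /\
  (forall v w : 'I_n, (v < m)%N -> (w < m)%N -> v != w -> N e v :&: C != N e w :&: C).

Lemma mono_ne (C C' : {set 'I_n}) (A B : {set 'I_n}) :
  C \subset C' -> A :&: C != B :&: C -> A :&: C' != B :&: C'.
Proof.
move=> sub; apply: contra => /eqP H; apply/eqP.
by rewrite -(setIidPr sub) !setIA H.
Qed.

Lemma mono_n0 (C C' : {set 'I_n}) (A : {set 'I_n}) :
  C \subset C' -> A :&: C != set0 -> A :&: C' != set0.
Proof.
move=> sub; apply: contra => /eqP H; apply/eqP.
by rewrite -(setIidPr sub) setIA H set0I.
Qed.

Lemma inv_ext (C C' : {set 'I_n}) (j : 'I_n) :
  Inv C j -> C \subset C' -> N e j :&: C' != set0 ->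
  (forall v : 'I_n, (v < j)%N -> N e v :&: C' != N e j :&: C') -> Inv C' j.+1.
Proof.
move=> [I1 I2] sub Hj Hd; split.
  move=> v; rewrite ltnS leq_eqVlt; case/orP => [/eqP|] Hv.
    by have -> : v = j by apply: val_inj; exact: Hv.
  exact: mono_n0 sub (I1 _ Hv).
move=> v w; rewrite ltnS leq_eqVlt => /orP[/eqP Hv|Hv];
  rewrite ltnS leq_eqVlt => /orP[/eqP Hw|Hw] Hvw.
- by exfalso; move/negP: Hvw; apply; apply/eqP; apply: val_inj; rewrite /= Hv Hw.
- have -> : v = j by apply: val_inj; exact: Hv.
  by rewrite eq_sym; apply: Hd.
- have -> : w = j by apply: val_inj; exact: Hw.
  by apply: Hd.
- exact: mono_ne sub (I2 _ _ Hv Hw Hvw).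
Qed.

Lemma step_none C (j : 'I_n) : Inv C j -> lex_step e j C = None ->
  exists k : 'I_n, (k < j)%N /\ N e k = N e j.
Proof.
move=> _; rewrite /lex_step; case: ifP => // _.
case: pickP => // k /andP[/andP[Hk _] _]; case: ifP => // /eqP H _.
by exists k.
Qed.

Lemma step_some C C' (j : 'I_n) : Inv C j -> lex_step e j C = Some C' -> Inv C' j.+1.
Proof.
move=> Iv; have [I1 I2] := Iv; rewrite /lex_step; case: ifP => [/eqP H0 [<-]|/negbT H0].
  have sub : C \subset setmin j (N e j) |: C by apply: subsetUr.
  apply: (@inv_ext _ _ _ Iv sub).
    apply/set0Pn; exists (setmin j (N e j)); rewrite inE setU11 andbT.
    by apply: setminP; apply/set0Pn; exists j; apply: mem_N.
  move=> v Hv; apply: mono_ne sub _; rewrite H0; exact: I1.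
case: pickP => [k /andP[/andP[Hk /eqP Htr] _]|Hnone].
  case: ifP => // /negbT Hne [<-].
  set x := setmin _ _.
  have sub : C \subset x |: C by apply: subsetUr.
  have Hx : x \in (N e j :\: N e k) :|: (N e k :\: N e j).
    apply: setminP; apply: contra Hne => /eqP H; apply/eqP/setP => y.
    move/setP: H => /(_ y); rewrite in_set0 in_setU !in_setD.
    by case: (y \in N e j); case: (y \in N e k).
  apply: (@inv_ext _ _ _ Iv sub).
    exact: mono_n0 sub H0.
  move=> v Hv; case: (eqVneq v k) => [->|Hvk].
    apply/negP => /eqP /setP /(_ x); rewrite !in_setI !setU11 !andbT.
    by move: Hx; rewrite in_setU !in_setD; case: (x \in N e j); case: (x \in N e k).
  apply: mono_ne sub _; rewrite -Htr; exact: I2.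
move=> [<-]; apply: (@inv_ext _ _ _ Iv (subxx C)) => // v Hv; apply/negP => /eqP Heq.
move: (Hnone v); rewrite Hv Heq eqxx /=; move/negP; apply.
apply/forallP => k'; apply/implyP => /andP[Hk' /eqP Hk'e].
have -> : k' = v.
  apply/eqP; apply: contraT => Hne'; move: (I2 _ _ Hk' Hv Hne').
  by rewrite Hk'e Heq eqxx.
by [].
Qed.

Definition P (m : nat) (oC : option {set 'I_n}) :=
  match oC with
  | Some C => Inv C m
  | None => exists v w : 'I_n, [/\ v != w, (v < m)%N, (w < m)%N & N e v = N e w]
  end.

Lemma fold_gen (s : seq 'I_n) m oC : map val s = iota m (size s) -> P m oC ->
  P (m + size s) (foldl (fun oC j => if oC is Some C then lex_step e j C else None) oC s).
Proof.
elim: s m oC => [|j s IH] m oC /=; first by rewrite addn0.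
case=> Hj Hs HP; rewrite addnS -addSn; apply: IH => //.
case: oC HP => [C|] /=.
  move=> HI; rewrite -Hj in HI.
  case Hst: (lex_step e j C) => [C'|] /=.
    by rewrite -Hj; exact: step_some HI Hst.
  have [k [Hk Hkj]] := step_none HI Hst.
  exists k, j; split => //.
  - by apply: contraTneq Hk => ->; rewrite ltnn.
  - by rewrite -Hj ltnS ltnW.
  - by rewrite -Hj ltnS.
by move=> [v [w [H1 H2 H3 H4]]]; exists v, w; split => //; apply: ltn_trans (ltnSn _).
Qed.

End S.

Theorem proposition1 (n : nat) (e : rel 'I_n) :
  simple_graph e ->
  (lex_algorithm e = None <-> ~ twin_free e) /\
  (twin_free e -> exists C, lex_algorithm e = Some C /\ identifying_code e C).
Proof.
move=> _.
have HP : P e n (lex_algorithm e).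
  have := @fold_gen n e (enum 'I_n) 0 (Some set0).
  rewrite size_enum_ord add0n; apply; first by rewrite val_enum_ord.
  by split.
have key : forall C, lex_algorithm e = Some C -> identifying_code e C.
  move=> C Hc; rewrite Hc in HP; case: HP => I1 I2; split.
    by move=> v; apply: I1.
  by move=> v w; apply: I2.
have tf : forall C, lex_algorithm e = Some C -> twin_free e.
  move=> C /key [_ H] v w /(H v w); apply: contra => /eqP ->; by [].
split; first split.
- move=> Hn; rewrite Hn in HP; case: HP => v [w [H1 _ _ H4]] Htf.
  by move: (Htf v w H1); rewrite H4 eqxx.
- by case Hl: (lex_algorithm e) => [C|] // Hn; exfalso; exact: Hn (tf C Hl).
- move=> Htf; case Hl: (lex_algorithm e) => [C|]; first by exists C; split => //; apply: key.
  rewrite Hl in HP; case: HP => v [w [H1 _ _ H4]].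
  by move: (Htf v w H1); rewrite H4 eqxx.
Qed.
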